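(* Let $\mathbb{F}$ be any field. There exists an infinite sequence $C_1,C_2,C_3,\dots$ of $\mathbb{F}$-linear codes such that, if $C_i$ has parameters $[n_i,k_i,d_i]$, then for every $i\ge 1$ \[ \frac{k_i d_i}{n_i}=2i>\sqrt{k_i}-1>2i-1 . \]
   Context: An $\mathbb{F}$-linear code of length $n$ is an $\mathbb{F}$-subspace $C\le\mathbb{F}^n$. Its parameters $[n,k,d]$ are the length $n$, the dimension $k=\dim_{\mathbb{F}}C$, and the minimum distance $d$. The minimum distance is the minimum Hamming weight of a nonzero codeword, where the weight $\mathrm{wt}(x)$ of $x\in\mathbb{F}^n$ is its number of nonzero coordinates. *)

(* Defs.v *)
From HB Require Import structures.
From mathcomp Require Import all_boot all_order all_algebra all_field.
Set Implicit Arguments. Unset Strict Implicit. Unset Printing Implicit Defensive.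
Import Order.TTheory GRing.Theory Num.Theory.
Local Open Scope ring_scope.

(* An F-linear code of length n is a subspace C of F^n, modelled as
   C : {vspace 'rV[F]_n}; its dimension is \dim C. *)

Definition wt (F : fieldType) (n : nat) (x : 'rV[F]_n) : nat :=
  #|[set j : 'I_n | x 0 j != 0]|.

Definition is_min_dist (F : fieldType) (n : nat) (C : {vspace 'rV[F]_n})
    (d : nat) : Prop :=
  (exists2 x : 'rV[F]_n, x \in C & (x != 0) && (wt x == d)) /\
  (forall x : 'rV[F]_n, x \in C -> x != 0 -> (d <= wt x)%N).

(* Main.v *)
Require Import Defs.
From HB Require Import structures.
From mathcomp Require Import all_boot all_order all_algebra all_field ring zify.
Import Order.TTheory GRing.Theory Num.Theory.
Local Open Scope ring_scope.
Section S. Variable F : fieldType. Variables a m : nat.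
Definition T := ('I_a.+2 * {ffun 'I_m -> bool})%type.
Definition vl (u : 'rV[F]_m) (t : T) : F := \sum_l u 0 l * (t.2 l)%:R.
Definition G : 'M[F]_(m, #|{: T}|) := \matrix_(l, j) (let t : T := enum_val j in if (nat_of_ord t.1 < 2)%N then ((t.2 l)%:R : F) else 0).
Definition Sset (u : 'rV[F]_m) := [set t : T | (nat_of_ord t.1 < 2)%N && (vl u t != 0)].
Definition B := [set t : T | (nat_of_ord t.1 < 2)%N].

Lemma mulGE u j : (u *m G) 0 j = let t : T := enum_val j in if (nat_of_ord t.1 < 2)%N then vl u t else 0.
Proof.
rewrite mxE /= /vl; under eq_bigr => l _ do rewrite mxE /=.
case: ifP => _ //; by rewrite big1 // => l _; rewrite mulr0.
Qed.

Lemma wtG u : wt (u *m G) = #|Sset u|.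
Proof.
rewrite /wt.
have -> : Sset u = enum_val @: [set j | (u *m G) 0 j != 0].
  apply/setP => t; rewrite inE; apply/idP/imsetP.
    move=> Ht; exists (enum_rank t); last by rewrite enum_rankK.
    by rewrite inE mulGE /= enum_rankK; case/andP: Ht => -> .
  move=> [j]; rewrite inE mulGE /= => Hj ->.
  case: ifP Hj => [H Hv|]; last by rewrite eqxx.
  by apply/andP; split.
by rewrite card_imset //; apply: enum_val_inj.
Qed.

Lemma cardB : #|B| = (2 * 2 ^ m)%N.
Proof.
have -> : B = setX [set c : 'I_a.+2 | (nat_of_ord c < 2)%N] setT.
  by apply/setP => t; rewrite !inE andbT.
rewrite cardsX cardsT card_ffun card_bool card_ord; congr (_ * _)%N.
have -> : [set c : 'I_a.+2 | (nat_of_ord c < 2)%N] = [set ord0; Ordinal (ltn0Sn a : (1 < a.+2)%N)].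
  apply/setP => c; rewrite !inE; case: c => [[|[|c]] Hc] //=.
by rewrite cards2.
Qed.

Definition flip (l0 : 'I_m) (t : T) : T := (t.1, [ffun l => if l == l0 then ~~ t.2 l else t.2 l]).

Lemma flipK l0 : involutive (flip l0).
Proof.
move=> [c s]; rewrite /flip /=; congr (_, _); apply/ffunP => l; rewrite !ffunE.
by case: (l == l0) => //; rewrite negbK.
Qed.

Lemma vl_flip u l0 t : vl u (flip l0 t) - vl u t = u 0 l0 * (if t.2 l0 then -1 else 1).
Proof.
rewrite /vl (bigD1 l0) //= [X in _ - X](bigD1 l0) //= ffunE eqxx.
have -> : \sum_(i < m | i != l0) u 0 i * ((flip l0 t).2 i)%:R = \sum_(i < m | i != l0) u 0 i * (t.2 i)%:R.
  by apply: eq_bigr => l /negbTE Hl; rewrite ffunE Hl.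
case: (t.2 l0) => /=; rewrite ?mulr0 ?mulr1 ?mulrN1; ring.
Qed.
Lemma flip_inj (l0 : 'I_m) : injective (flip l0).
Proof. exact: inv_inj (flipK l0). Qed.

Lemma lowerB (u : 'rV[F]_m) (l0 : 'I_m) : u 0 l0 != 0 -> (#|B| <= 2 * #|Sset u|)%N.
Proof.
move=> Hu.
have sub : B \subset Sset u :|: flip l0 @: Sset u.
  apply/subsetP => t; rewrite !inE => Ht.
  case Hv: (vl u t != 0); first by rewrite Ht.
  apply/orP; right; apply/imsetP; exists (flip l0 t); last by rewrite flipK.
  rewrite inE /= Ht /=; apply/negP => /eqP H0.
  move/negbFE/eqP: Hv => Hv.
  have := vl_flip u l0 t; rewrite H0 Hv subrr => /esym/eqP.
  by rewrite mulf_eq0 (negbTE Hu) /=; case: ifP => _; rewrite ?oppr_eq0 oner_eq0.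
apply: (leq_trans (subset_leq_card sub)); apply: (leq_trans (leq_card_setU _ _)).
by rewrite card_imset; [rewrite mul2n addnn | apply: flip_inj].
Qed.

Lemma upperB (l0 : 'I_m) : (2 * #|Sset (delta_mx (ord0 : 'I_1) l0)| <= #|B|)%N.
Proof.
set S := Sset _.
have vlE t : vl (delta_mx (ord0 : 'I_1) l0) t = (t.2 l0)%:R.
  rewrite /vl (bigD1 l0) //= big1 ?addr0 => [|l Hl]; rewrite mxE ?eqxx ?mul1r //.
  by move: Hl; case: eqP => //= _ _; rewrite mul0r.
have inS t : (t \in S) = (nat_of_ord t.1 < 2)%N && t.2 l0.
  by rewrite inE vlE; case: (t.2 l0); rewrite ?oner_eq0 ?eqxx.
have disj : S :&: flip l0 @: S = set0.
  apply/setP => t; rewrite !inE; apply/negP => /andP [H1 /imsetP [t' Ht' E]].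
  subst t; move: H1 Ht'; rewrite vlE inS /= ffunE eqxx.
  by case: (t'.2 l0) => /=; rewrite ?andbF ?eqxx ?oner_eq0 /= ?andbF.
have sub : S :|: flip l0 @: S \subset B.
  apply/subsetP => t; rewrite in_setU inE => /orP [|/imsetP [t' Ht' ->]].
    by rewrite inE => /andP [].
  by move: Ht'; rewrite inS inE => /andP [].
have := cardsUI S (flip l0 @: S); rewrite disj cards0 addn0 card_imset; last exact: flip_inj.
by rewrite addnn -mul2n => <-; apply: subset_leq_card.
Qed.

Lemma Gcoord (u : 'rV[F]_m) l0 : (u *m G) 0 (enum_rank ((ord0, [ffun l => l == l0]) : T)) = u 0 l0.
Proof.
rewrite mulGE /= enum_rankK /= /vl (bigD1 l0) //= big1 ?addr0 => [|l Hl]; rewrite ffunE ?eqxx ?mulr1 //.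
by rewrite (negbTE Hl) mulr0.
Qed.
End S.

Definition kk (i : nat) := (2 * i * (2 * i + 2))%N.
Definition code (F : fieldType) (i : nat) : {vspace 'rV[F]_#|{: T (2 * i) (kk i)}|} :=
  (linfun (mulmxr (G F (2 * i) (kk i))) @: fullv)%VS.

Lemma sqrt_bounds (i : nat) : (1 <= i)%N ->
  ((2 * i)%:R > sqrtC ((kk i)%:R : algC) - 1) /\
  (sqrtC ((kk i)%:R : algC) - 1 > (2 * i)%:R - 1).
Proof.
move=> Hi.
have E (j : nat) : (j%:R : algC) = sqrtC ((j ^ 2)%N%:R).
  by rewrite natrX sqrCK // ler0n.
split.
  rewrite ltrBlDr natr1 (E (2 * i).+1) ltr_sqrtC ?qualifE /= ?ler0n // ltr_nat /kk; lia.
rewrite ltrD2r (E (2 * i)) ltr_sqrtC ?qualifE /= ?ler0n // ltr_nat /kk; lia.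
Qed.

Theorem theorem1p1 (F : fieldType) :
  exists (n : nat -> nat) (C : forall i : nat, {vspace 'rV[F]_(n i)}),
    forall i : nat, (1 <= i)%N ->
      exists d : nat,
        is_min_dist (C i) d /\
        let k := \dim (C i) in
        ((k%:R * d%:R / (n i)%:R : algC) = (2 * i)%:R) /\
        ((2 * i)%:R > sqrtC (k%:R : algC) - 1) /\
        (sqrtC (k%:R : algC) - 1 > (2 * i)%:R - 1).
Proof.
exists (fun i => #|{: T (2 * i) (kk i)}|), (code F).
move=> i Hi; exists (2 ^ kk i)%N.
set m := kk i.
have m_gt0 : (0 < m)%N by rewrite /m /kk; lia.
set l0 : 'I_m := Ordinal m_gt0.
have HB := cardB (2 * i) m.
have dimC : \dim (code F i) = m.
  rewrite /code limg_dim_eq; first by rewrite dimvf dim_matrix /m; lia.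
  have -> : lker (linfun (@mulmxr _ 1 _ _ (G F (2 * i) m))) = 0%VS.
    apply/eqP; apply/lker0P => u v; rewrite !lfunE /= => Euv.
    by apply/rowP => l; rewrite -(Gcoord F (2 * i) m u l) -(Gcoord F (2 * i) m v l) Euv.
  by rewrite capv0.
split; [split|].
- exists (delta_mx (ord0 : 'I_1) l0 *m G F (2 * i) m).
    by rewrite /code; have := memv_img (linfun (@mulmxr _ 1 _ _ (G F (2 * i) m))) (memvf (delta_mx (ord0 : 'I_1) l0)); rewrite lfunE.
  apply/andP; split.
    apply/eqP => /matrixP /(_ 0 (enum_rank ((ord0, [ffun l => l == l0]) : T (2 * i) m))).
    by rewrite Gcoord !mxE !eqxx /= => /eqP; rewrite oner_eq0.
  rewrite wtG; apply/eqP.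
  have H1 := upperB F (2 * i) m l0.
  have H2 := lowerB F (2 * i) m (delta_mx (ord0 : 'I_1) l0) l0.
  rewrite mxE !eqxx oner_eq0 in H2; have {H2} := H2 isT.
  rewrite HB in H1 * => H2; apply/eqP; rewrite eqn_leq -(leq_pmul2l (isT : (0 < 2)%N)) H1 -(leq_pmul2l (isT : (0 < 2)%N)) H2 //.
- move=> x /memv_imgP [u _ ->]; rewrite lfunE /= => Hx.
  have [l Hl] : exists l, u 0 l != 0.
    apply/existsP; apply: contraR Hx => /existsPn H.
    have -> : u = 0 by apply/rowP => l; rewrite mxE; apply/eqP; move: (H l); rewrite negbK.
    by rewrite mul0mx eqxx.
  have := lowerB F (2 * i) m u l Hl; rewrite HB wtG leq_pmul2l //.
- rewrite /= dimC; split; last exact: sqrt_bounds.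
  rewrite -natrM.
  have -> : (m * 2 ^ m = 2 * i * #|{: T (2 * i) m}|)%N.
    rewrite card_prod card_ord card_ffun card_bool card_ord /m /kk -mulnA addn2.
  by [].

  by rewrite natrM mulfK // pnatr_eq0 -lt0n card_prod card_ord card_ffun card_bool muln_gt0 expn_gt0.
Qed.
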